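(* Assume that the graph Laplacian $\mathbf{L}$ has precisely $r\le n$ distinct eigenvalues. Then $\mathcal{A}_{\mathbf{L}}$ is an $r$-dimensional subalgebra of the algebra $(\mathcal{L}(G),+,\ast)$. A signal $x\in\mathcal{L}(G)$ is contained in $\mathcal{A}_{\mathbf{L}}$ if and only if $\hat{x}_k=\hat{x}_{k'}$ whenever $\lambda_k=\lambda_{k'}$. Furthermore, $$\mathcal{A}_{\mathbf{L}}=\mathrm{span}\{f_{\mathbb{1}},\mathbf{L}f_{\mathbb{1}},\ldots,\mathbf{L}^{r-1}f_{\mathbb{1}}\}.$$
   Context: Let $G$ be a graph with vertex set $V=\{v_1,\dots,v_n\}$ and a symmetric, entrywise non-negative weighted adjacency matrix $\mathbf{A}\in\mathbb{R}^{n\times n}$. The degree matrix $\mathbf{D}$ is diagonal with $\mathbf{D}_{ii}=\sum_k\mathbf{A}_{ik}$ (assumed positive), and the normalized graph Laplacian is $\mathbf{L}=\mathbf{I}_n-\mathbf{D}^{-1/2}\mathbf{A}\mathbf{D}^{-1/2}$. Signals $x:V\to\mathbb{R}$ are identified with vectors in $\mathbb{R}^n$; $\mathcal{L}(G)$ denotes this space. Fix an orthonormal eigendecomposition $\mathbf{L}=\mathbf{U}\,\mathrm{diag}(\lambda_1,\dots,\lambda_n)\,\mathbf{U}^\intercal$ with $\lambda_1\le\dots\le\lambda_n$, where the columns $u_1,\dots,u_n$ of the orthogonal matrix $\mathbf{U}$ are eigenvectors. The graph Fourier transform is $\hat{x}=\mathbf{U}^\intercal x$, i.e. $\hat{x}_k=u_k^\intercal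 x$. The graph convolution is $x\ast y=\mathbf{U}\,\mathrm{diag}(\hat{x})\,\mathbf{U}^\intercal y$; it makes $\mathcal{L}(G)$ a commutative associative algebra with unit $f_{\mathbb{1}}=\sum_{k=1}^n u_k$. Define $\mathcal{A}_{\mathbf{L}}=\mathrm{span}\{f_{\mathbb{1}},\mathbf{L}f_{\mathbb{1}},\mathbf{L}^2 f_{\mathbb{1}},\dots,\mathbf{L}^{n-1}f_{\mathbb{1}}\}$. *)

(* Defs.v *)
(* Real scalars generalized to any real closed field R. *)
From HB Require Import structures.
From mathcomp Require Import all_boot all_order all_algebra.
Set Implicit Arguments. Unset Strict Implicit. Unset Printing Implicit Defensive.
Import Order.TTheory GRing.Theory Num.Theory.
Local Open Scope ring_scope.

Section GraphSignal.
Variables (R : rcfType) (n : nat).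

Definition degree (A : 'M[R]_n) (i : 'I_n) : R := \sum_(k < n) A i k.

Definition deg_invsqrt (A : 'M[R]_n) : 'M[R]_n :=
  diag_mx (\row_i (Num.sqrt (degree A i))^-1).

Definition normLap (A : 'M[R]_n) : 'M[R]_n :=
  1%:M - deg_invsqrt A *m A *m deg_invsqrt A.

Definition gft (U : 'M[R]_n) (x : 'cV[R]_n) : 'cV[R]_n := U^T *m x.

Definition gconv (U : 'M[R]_n) (x y : 'cV[R]_n) : 'cV[R]_n :=
  U *m diag_mx (gft U x)^T *m U^T *m y.

Definition f_one (U : 'M[R]_n) : 'cV[R]_n := \sum_(k < n) col k U.

Definition krylov (L U : 'M[R]_n) (m : nat) : {vspace 'cV[R]_n} :=
  <<[seq L ^+ i *m f_one U | i <- iota 0 m]>>%VS.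

Definition A_L (L U : 'M[R]_n) : {vspace 'cV[R]_n} := krylov L U n.

Definition n_distinct (lam : 'I_n -> R) : nat := size (undup [seq lam k | k <- enum 'I_n]).

End GraphSignal.

(* Main.v *)
Require Import Defs.
From HB Require Import structures.
From mathcomp Require Import all_boot all_order all_algebra.
Import Order.TTheory GRing.Theory Num.Theory.
Local Open Scope ring_scope.

Lemma fone_eq (R : rcfType) n (U : 'M[R]_n) : f_one U = U *m const_mx 1.
Proof.
apply/matrixP => a b; rewrite !mxE summxE; apply: eq_bigr => k _.
by rewrite !mxE mulr1.
Qed.

Lemma powL (R : rcfType) n (U L : 'M[R]_n) (lam : 'I_n -> R) :
  U^T *m U = 1%:M -> L = U *m diag_mx (\row_k lam k) *m U^T ->
  forall i, L ^+ i *m f_one U = U *m \col_k (lam k ^+ i).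
Proof.
move=> HU HL; elim=> [|i IH].
  rewrite expr0 fone_eq mulmxA mul1mx; congr (_ *m _).
  by apply/matrixP => a b; rewrite !mxE expr0.
rewrite exprS -mulmxE -mulmxA IH HL -!mulmxA (mulmxA U^T) HU mul1mx.
rewrite mul_diag_mx; congr (_ *m _); apply/matrixP => a b.
by rewrite !mxE exprS.
Qed.

Lemma nthX (R : rcfType) n (f : nat -> 'cV[R]_n) m i :
  (i < m)%N -> (map f (iota 0 m))`_i = f i.
Proof. by move=> him; rewrite (nth_map 0%N) ?size_iota // nth_iota. Qed.

Lemma vdm_unit (R : rcfType) (t : seq R) m : uniq t -> size t = m ->
  Vandermonde m (\row_(j < m) t`_j) \in unitmx.
Proof.
move=> ut st; rewrite unitmxE det_Vandermonde unitfE.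
rewrite prodf_seq_neq0; apply/allP => i _ /=.
rewrite prodf_seq_neq0; apply/allP => j _; apply/implyP => lij.
rewrite !mxE subr_eq0 nth_uniq ?st ?ltn_ord //.
by apply/negP => /eqP E; move: lij; rewrite E ltnn.
Qed.
Lemma kry_sub (R : rcfType) n (U L : 'M[R]_n) (lam : 'I_n -> R) m x :
  U^T *m U = 1%:M -> L = U *m diag_mx (\row_k lam k) *m U^T ->
  x \in krylov L U m ->
  forall k k', lam k = lam k' -> gft U x k 0 = gft U x k' 0.
Proof.
move=> HU HL Hx.
pose X := [seq L ^+ i *m f_one U | i <- iota 0 m].
have sX : size X = m by rewrite size_map size_iota.
have := coord_span (X:=in_tuple X) Hx.
set c := coord _ => Ex.
have key : forall k, gft U x k 0 = \sum_(i < size X) c i x * lam k ^+ (val i).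
  move=> k; rewrite /gft {1}Ex mulmx_sumr summxE; apply: eq_bigr => i _.
  have him : (i < m)%N by rewrite -sX ltn_ord.
  rewrite -scalemxAr mxE.
  change ((in_tuple X)`_i) with (X`_i).
  rewrite /X (@nthX _ _ (fun i => L ^+ i *m f_one U) _ _ him) (@powL _ _ _ _ lam HU HL) mulmxA HU mul1mx.
  by rewrite mxE.
by move=> k k' E; rewrite !key E.
Qed.

Lemma W_sub (R : rcfType) n (U L : 'M[R]_n) (lam : 'I_n -> R) x :
  U^T *m U = 1%:M -> L = U *m diag_mx (\row_k lam k) *m U^T ->
  (forall k k', lam k = lam k' -> gft U x k 0 = gft U x k' 0) ->
  x \in krylov L U (n_distinct lam).
Proof.
move=> HU HL Hc.
set s := undup [seq lam k | k <- enum 'I_n].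
have -> : n_distinct lam = size s by [].
set r := size s.
pose c := gft U x.
have mems k : lam k \in s by rewrite mem_undup map_f ?mem_enum.
pose g : 'rV[R]_r := \row_j (if [pick k | lam k == s`_j] is Some k then c k 0 else 0).
pose V := Vandermonde r (\row_(j < r) s`_j).
have uV : V \in unitmx := @vdm_unit _ s r (undup_uniq _) erefl.
pose a := g *m invmx V.
have aV : a *m V = g by rewrite /a -mulmxA mulVmx // mulmx1.
have HUt : U *m U^T = 1%:M := mulmx1C HU.
have Ex : x = \sum_(i < r) a 0 i *: (L ^+ i *m f_one U).
  transitivity (U *m c); first by rewrite /c /gft mulmxA HUt mul1mx.
  under eq_bigr => i _ do rewrite (@powL _ _ _ _ lam HU HL) scalemxAr.
  rewrite -mulmx_sumr; congr (_ *m _).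
  apply/matrixP => k b; rewrite (ord1 b) summxE.
  have jr : (index (lam k) s < r)%N by rewrite index_mem.
  pose j := Ordinal jr.
  have sj : s`_j = lam k by rewrite nth_index.
  transitivity (g 0 j); last first.
    rewrite -aV mxE; apply: eq_bigr => i _; by rewrite !mxE sj.
  rewrite [g _ _]mxE; case: (pickP (fun k0 => lam k0 == s`_j)) => [k' /eqP Ek'|/(_ k)]; last by rewrite sj eqxx.
  by apply: Hc; rewrite Ek' sj.
rewrite Ex; apply: rpred_sum => i _; apply: rpredZ; apply: memv_span.
by apply: map_f; rewrite mem_iota /=.
Qed.

Lemma kry_dim (R : rcfType) n (U L : 'M[R]_n) (lam : 'I_n -> R) :
  U^T *m U = 1%:M -> L = U *m diag_mx (\row_k lam k) *m U^T ->
  \dim (krylov L U (n_distinct lam)) = n_distinct lam.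
Proof.
move=> HU HL.
set s := undup [seq lam k | k <- enum 'I_n].
have -> : n_distinct lam = size s by [].
pose X := [seq L ^+ i *m f_one U | i <- iota 0 (size s)].
have sX : size X = size s by rewrite size_map size_iota.
suff /eqP : free X by rewrite sX.
apply/(@freeP _ _ _ (in_tuple X)) => k Hk i.
pose V := Vandermonde (size X) (\row_(j < size X) s`_j).
have uV : V \in unitmx := @vdm_unit _ s (size X) (undup_uniq _) (esym sX).
pose a : 'rV_(size X) := \row_i k i.
have aV0 : a *m V = 0.
  apply/rowP => j; rewrite !mxE.
  have js : (j < size s)%N by rewrite -sX.
  have := mem_nth 0 js; rewrite mem_undup => /mapP [k0 _ Ek0].
  have := congr1 (fun v => (U^T *m v) k0 0) Hk.
  rewrite /= mulmx0 mulmx_sumr summxE => H.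
  transitivity ((0 : 'cV[R]_n) k0 0); last by rewrite mxE.
  rewrite -H.
  apply: eq_bigr => i0 _.
  have him : (i0 < size s)%N by rewrite -sX ltn_ord.
  rewrite -scalemxAr mxE.
  change ((in_tuple X)`_i0) with (X`_i0).
  rewrite /X (@nthX _ _ (fun i => L ^+ i *m f_one U) _ _ him) (@powL _ _ _ _ lam HU HL) mulmxA HU mul1mx.
  by rewrite !mxE Ek0.
have : a = 0 by rewrite -[a]mulmx1 -(mulmxV uV) mulmxA aV0 mul0mx.
by move/rowP/(_ i); rewrite !mxE.
Qed.

Theorem proposition1 (R : rcfType) (n : nat) (A : 'M[R]_n)
  (U : 'M[R]_n) (lam : 'I_n -> R) (r : nat) :
  A^T = A ->
  (forall i j, 0 <= A i j) ->
  (forall i, 0 < degree A i) ->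
  U^T *m U = 1%:M ->
  normLap A = U *m diag_mx (\row_k lam k) *m U^T ->
  (forall k k' : 'I_n, (k <= k')%N -> lam k <= lam k') ->
  n_distinct lam = r ->
  [/\ (f_one U \in A_L (normLap A) U /\
       {in A_L (normLap A) U &, forall x y, gconv U x y \in A_L (normLap A) U}),
      \dim (A_L (normLap A) U) = r,
      (forall x : 'cV[R]_n, x \in A_L (normLap A) U <->
         (forall k k' : 'I_n, lam k = lam k' -> gft U x k 0 = gft U x k' 0))
    & A_L (normLap A) U = krylov (normLap A) U r].
Proof.
move=> _ _ _ HU HL _ Hr.
move: HL; set L := normLap A => HL.
have rn : (r <= n)%N.
  by rewrite -Hr /n_distinct (leq_trans (size_undup _)) // size_map size_enum_ord.
have sub_rn : (krylov L U r <= A_L L U)%VS.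
  apply/span_subvP => v /mapP [i]; rewrite mem_iota => /andP [_ hi] ->.
  apply: memv_span; apply: map_f; rewrite mem_iota /=.
  by rewrite add0n in hi *; exact: leq_trans hi rn.
have W_r x : (forall k k', lam k = lam k' -> gft U x k 0 = gft U x k' 0) ->
    x \in krylov L U r.
  by move=> H; rewrite -Hr; exact: (@W_sub _ _ _ _ lam x HU HL H).
have AL_r : A_L L U = krylov L U r.
  apply/subv_anti/andP; split; last exact: sub_rn.
  apply/subvP => x Hx; apply: W_r; exact: (@kry_sub _ _ _ _ lam n x HU HL Hx).
have memP x : x \in A_L L U <->
    (forall k k', lam k = lam k' -> gft U x k 0 = gft U x k' 0).
  split; first exact: (@kry_sub _ _ _ _ lam n x HU HL).
  by move=> H; rewrite AL_r; exact: W_r.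
have key x y k : gft U (gconv U x y) k 0 = gft U x k 0 * gft U y k 0.
  rewrite /gconv {1}/gft !mulmxA HU mul1mx -mulmxA mul_diag_mx mxE.
  by rewrite [in LHS]mxE.
split.
- split.
    apply/memP => k k' _; rewrite /gft fone_eq mulmxA HU mul1mx !mxE //.
  move=> x y /memP Hx /memP Hy; apply/memP => k k' E.
  by rewrite !key (Hx _ _ E) (Hy _ _ E).
- by rewrite AL_r -Hr; exact: kry_dim.
- exact: memP.
- exact: AL_r.
Qed.
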